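(* Let $\mathbb{K}$ be a field, $n>1$, $a=\sum_{j=0}^d c_j s^j\in\mathbb{K}[s]^n$ a non-zero row vector of degree $d$ ($c_j\in\mathbb{K}^n$ row vectors), and $A\in\mathbb{K}^{(2d+1)\times n(d+1)}$ the matrix whose $(i,\,kn+r)$ entry ($1\le i\le 2d+1$, $0\le k\le d$, $1\le r\le n$) is the $r$-th entry of $c_{i-1-k}$ (zero if $i-1-k\notin\{0,\dots,d\}$). If $b_1,\dots,b_l$ is a basis of $\ker(A)$, then $\mathrm{syz}(a)=\langle b_1^\flat,\dots,b_l^\flat\rangle_{\mathbb{K}[s]}$.
   Context: For $v\in\mathbb{K}^{n(d+1)}$ written in blocks $v=[w_0;\dots;w_d]$ with $w_i\in\mathbb{K}^n$, $v^\flat=\sum_{i=0}^d s^i w_i\in\mathbb{K}[s]^n$. $\mathrm{syz}(a)=\{h\in\mathbb{K}[s]^n\mid a\,h=0\}$ ($h$ column vectors), and $\langle\cdot\rangle_{\mathbb{K}[s]}$ denotes the $\mathbb{K}[s]$-module generated. *)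

(* Defs.v *)
From HB Require Import structures.
From mathcomp Require Import all_boot all_order all_algebra.
Set Implicit Arguments. Unset Strict Implicit. Unset Printing Implicit Defensive.
Import Order.TTheory GRing.Theory Num.Theory.
Local Open Scope ring_scope.

Definition pvdeg (K : fieldType) (n : nat) (a : 'rV[{poly K}]_n) : nat :=
  (\max_(r < n) size (a ord0 r)).-1.

(* The column index k*n + r (0-based) of K^{n(d+1)} = block k, entry r. *)
Lemma blk_idx_subproof (d n : nat) (k : 'I_d.+1) (r : 'I_n) :
  (k * n + r < d.+1 * n)%N.
Proof.
case: k r => k hk [r hr] /=.
have h1 : (k * n + r < k * n + n)%N by rewrite ltn_add2l.
apply: (leq_trans h1).
have -> : (k * n + n = k.+1 * n)%N by rewrite mulSn addnC.
by rewrite leq_mul2r hk orbT.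
Qed.

Definition blk_idx (d n : nat) (k : 'I_d.+1) (r : 'I_n) : 'I_(d.+1 * n) :=
  Ordinal (blk_idx_subproof k r).

(* The (2d+1) x n(d+1) matrix A: entry (i, k n + r) (0-based i, k, r) is the
   r-th entry of c_{i-k}, i.e. the coefficient of s^(i-k) in a_r,
   and 0 when i - k < 0 (coefficients beyond degree d are 0 anyway). *)
Definition coef_mx (K : fieldType) (n : nat) (a : 'rV[{poly K}]_n)
  : 'M[K]_((pvdeg a).*2.+1, (pvdeg a).+1 * n) :=
  \matrix_(i, j) \sum_(k < (pvdeg a).+1) \sum_(r < n | blk_idx k r == j)
      (if (k <= i)%N then (a ord0 r)`_(i - k) else 0).

Definition flat (K : fieldType) (n d : nat) (v : 'cV[K]_(d.+1 * n))
  : 'cV[{poly K}]_n :=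
  \col_(r < n) \sum_(k < d.+1) v (blk_idx k r) ord0 *: 'X^k.

(* Main.v *)
Require Import Defs.
From HB Require Import structures.
From mathcomp Require Import all_boot all_order all_algebra.
From mathcomp Require Import zify ring.
Set Implicit Arguments. Unset Strict Implicit. Unset Printing Implicit Defensive.
Import Order.TTheory GRing.Theory Num.Theory.
Local Open Scope ring_scope.

Section H.
Variables (K : fieldType) (n : nat) (a : 'rV[{poly K}]_n).
Local Notation d := (pvdeg a).

Lemma size_a r : (size (a ord0 r) <= d.+1)%N.
Proof.
rewrite /pvdeg; have := @leq_bigmax _ (fun r => size (a ord0 r)) r.
case: (\max_(r0 < n) size (a ord0 r0)) => [|m] //=.
by rewrite leqn0 => /eqP ->.
Qed.

Lemma coef_flat (v : 'cV[K]_(d.+1 * n)) i :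
  ((a *m flat v) ord0 ord0)`_i =
  \sum_(k < d.+1) \sum_(r < n) (if (k <= i)%N then (a ord0 r)`_(i - k) else 0) * v (blk_idx k r) ord0.
Proof.
rewrite mxE coef_sum exchange_big /=; apply: eq_bigr => r _.
rewrite mxE mulr_sumr coef_sum; apply: eq_bigr => k _.
rewrite -scalerAr coefZ coefMXn mulrC; case: leqP => //= _; by rewrite mulr0.
Qed.

Lemma coef_mxM (v : 'cV[K]_(d.+1 * n)) i :
  (coef_mx a *m v) i ord0 =
  \sum_(k < d.+1) \sum_(r < n) (if (k <= i)%N then (a ord0 r)`_(i - k) else 0) * v (blk_idx k r) ord0.
Proof.
rewrite mxE.
under eq_bigr => j _ do rewrite mxE mulr_suml.
rewrite exchange_big /=; apply: eq_bigr => k _.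
under eq_bigr => j _ do rewrite mulr_suml.
rewrite (exchange_big_dep xpredT) //=; apply: eq_bigr => r _.
by rewrite (eq_bigl (fun j => j == blk_idx k r)) ?big_pred1_eq // => j; rewrite eq_sym.
Qed.

Lemma mx11P (R : nzRingType) (M : 'M[R]_1) : M ord0 ord0 = 0 -> M = 0.
Proof. by move=> h; apply/matrixP => i j; rewrite !ord1 mxE. Qed.

Lemma flat_ker (v : 'cV[K]_(d.+1 * n)) : coef_mx a *m v = 0 -> a *m flat v = 0.
Proof.
move=> hv; apply: mx11P; apply/polyP => i; rewrite coef0 coef_flat.
case: (ltnP i d.*2.+1) => hi.
  by move/matrixP: hv => /(_ (Ordinal hi) ord0); rewrite coef_mxM mxE.
apply: big1 => k _; apply: big1 => r _.
case: leqP => hk; last by rewrite mul0r.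
rewrite nth_default ?mul0r //; apply: leq_trans (size_a r) _.
have := ltn_ord k; rewrite -addnn in hi; lia.
Qed.

Lemma flat_lin l (b : 'I_l -> 'cV[K]_(d.+1 * n)) (c : 'I_l -> K) :
  flat (\sum_j c j *: b j) = \sum_j (c j)%:P *: flat (b j).
Proof.
apply/matrixP => r z; rewrite !mxE summxE.
under [RHS]eq_bigr => j _ do rewrite !mxE mulr_sumr.
rewrite exchange_big /=; apply: eq_bigr => k _.
rewrite summxE scaler_suml; apply: eq_bigr => j _.
by rewrite !mxE mul_polyC scalerA.
Qed.

Lemma low (h : 'cV[{poly K}]_n) : (0 < n)%N -> a *m h = 0 ->
  (forall r, size (h r ord0) <= d.+1)%N ->
  exists v, coef_mx a *m v = 0 /\ flat v = h.
Proof.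
move=> n0 ha hs.
pose v : 'cV[K]_(d.+1 * n) := \col_j (h (Ordinal (ltn_pmod j n0)) ord0)`_(j %/ n).
have hv k r : v (blk_idx k r) ord0 = (h r ord0)`_k.
  rewrite mxE /=; have -> : Ordinal (ltn_pmod (k * n + r) n0) = r.
    by apply: val_inj => /=; rewrite modnMDl modn_small.
  by rewrite divnMDl // divn_small ?addn0.
have hf : flat v = h.
  apply/matrixP => r z; rewrite ord1 mxE.
  under eq_bigr => k _ do rewrite hv.
  rewrite -(poly_def (d.+1) (fun k => (h r ord0)`_k)).
  apply/polyP => i; rewrite coef_poly; case: ltnP => // hi.
  by rewrite nth_default // (leq_trans (hs r)).
exists v; split => //.
apply/matrixP => i z; rewrite ord1 coef_mxM mxE -coef_flat hf ha mxE coef0 //.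
Qed.
End H.

Lemma sum_if_eq (R : comNzRingType) m (F : 'I_m -> R) (r : 'I_m) c :
  \sum_i F i * (if r == i then c else 0) = F r * c.
Proof.
rewrite (bigD1 r) //= eqxx big1 ?addr0 // => i /negbTE.
by rewrite eq_sym => ->; rewrite mulr0.
Qed.

Theorem lemma5 (K : fieldType) (n : nat) (a : 'rV[{poly K}]_n)
  (l : nat) (b : 'I_l -> 'cV[K]_((pvdeg a).+1 * n)) :
  (1 < n)%N -> a != 0 ->
  (* b_1, ..., b_l is a basis of ker(A) *)
  (forall j, coef_mx a *m b j = 0) ->
  (forall c : 'I_l -> K, \sum_(j < l) c j *: b j = 0 -> forall j, c j = 0) ->
  (forall v : 'cV[K]_((pvdeg a).+1 * n), coef_mx a *m v = 0 ->
     exists c : 'I_l -> K, v = \sum_(j < l) c j *: b j) ->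
  (* syz(a) = < b_1^flat, ..., b_l^flat >_{K[s]} *)
  forall h : 'cV[{poly K}]_n,
    a *m h = 0 <-> exists p : 'I_l -> {poly K}, h = \sum_(j < l) p j *: flat (b j).
Proof.
move=> n1 a0 hb hfree hspan h; split; last first.
  case=> p ->; rewrite mulmx_sumr; apply: big1 => j _.
  by rewrite -scalemxAr flat_ker // scaler0.
move=> ha.
pose S (x : 'cV[{poly K}]_n) := exists p : 'I_l -> {poly K}, x = \sum_(j < l) p j *: flat (b j).
have Slow x : a *m x = 0 -> (forall r, size (x r ord0) <= (pvdeg a).+1)%N -> S x.
  move=> hx hs; have [v [hv <-]] := low (ltnW n1) hx hs.
  have [c ->] := hspan v hv.
  by exists (fun j => (c j)%:P); rewrite flat_lin.
have SD x y : S x -> S y -> S (x + y).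
  by case=> p -> [q ->]; exists (fun j => p j + q j); rewrite -big_split; apply: eq_bigr => j _; rewrite scalerDl.
have SZ c x : S x -> S (c *: x).
  by case=> p ->; exists (fun j => c * p j); rewrite scaler_sumr; apply: eq_bigr => j _; rewrite scalerA.
have S0 : S 0 by exists (fun _ => 0); rewrite big1 // => j _; rewrite scale0r.
have [p0 g0] : exists p0, a ord0 p0 != 0.
  have : [exists p0, a ord0 p0 != 0].
    apply: contraR a0 => /existsPn H; apply/eqP/matrixP => i j.
    by rewrite ord1 mxE; apply/eqP/negPn/H.
  by case/existsP => p0 hp; exists p0.
set g := a ord0 p0 in g0.
pose q i := h i ord0 %/ g.
pose Kv (i : 'I_n) : 'cV[{poly K}]_n :=
  \col_r ((if r == i then g else 0) - (if r == p0 then a ord0 i else 0)).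
pose h' : 'cV[{poly K}]_n :=
  \col_r ((h r ord0 %% g) + (if r == p0 then \sum_i q i * a ord0 i else 0)).
have hdec : h = h' + \sum_i q i *: Kv i.
  apply/matrixP => r z; rewrite ord1 !mxE summxE.
  set T := \sum_i q i * a ord0 i.
  under eq_bigr => i _ do rewrite /Kv !mxE mulrBr.
  rewrite sumrB sum_if_eq {1}(divp_eq (h r ord0) g).
  case: (r == p0); last first.
    by rewrite big1 ?subr0 ?addr0 1?addrC // => i _; rewrite mulr0.
  rewrite -/(q r) -/T; ring.
have hKa i : a *m Kv i = 0.
  apply: mx11P; rewrite mxE.
  under eq_bigr => r _ do rewrite mxE mulrBr.
  rewrite sumrB.
  under eq_bigr => r _ do rewrite (eq_sym r i).
  under [X in _ - X]eq_bigr => r _ do rewrite (eq_sym r p0).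
  by rewrite !sum_if_eq mulrC subrr.
have hKs i r : (size (Kv i r ord0) <= (pvdeg a).+1)%N.
  rewrite mxE; have hs := size_a a; case: (r == i); case: (r == p0);
    rewrite ?subr0 ?sub0r ?size_polyN ?size_poly0 ?hs //.
  by apply: (leq_trans (size_polyD _ _)); rewrite size_polyN geq_max !hs.
have hh' : a *m h' = 0.
  have -> : h' = h - \sum_(k < n) q k *: Kv k by rewrite hdec addrK.
  rewrite mulmxBr ha mulmx_sumr big1 ?subr0 // => k _.
  by rewrite -scalemxAr hKa scaler0.
suff hS : S h by exact: hS. rewrite hdec; apply: (SD).
  apply: (Slow) => // r.
  have hsr k : k != p0 -> (size (h' k ord0) < size g)%N.
    by move=> hk; rewrite mxE (negbTE hk) addr0 ltn_modp.
  clearbody h'.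
  case: (eqVneq r p0) => [->|hr]; last first.
    exact: leq_trans (ltnW (hsr r hr)) (size_a a p0).
  have hg : (0 < size g)%N by rewrite size_poly_gt0.
  have E : g * h' p0 ord0 = - \sum_(k | k != p0) a ord0 k * h' k ord0.
    move/matrixP: hh' => /(_ ord0 ord0); rewrite [X in X = _ -> _]mxE (bigD1 p0) //= => /eqP.
    move=> /eqP H; rewrite mxE in H; move/eqP: H; by rewrite addr_eq0 => /eqP.
  have hb' : (size (\sum_(k | k != p0) a ord0 k * h' k ord0)%R <= (pvdeg a + size g).-1)%N.
    apply: leq_trans (size_sum _ _ _) _; apply/bigmax_leqP => k hk.
    apply: leq_trans (size_polyMleq _ _) _.
    have := size_a a k; have := hsr k hk; lia.
  case: (eqVneq (h' p0 ord0) 0) => [->|hz]; first by rewrite size_poly0.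
  have := size_mul g0 hz; rewrite E size_polyN => e.
  rewrite e in hb'; have key : forall x y z : nat, (0 < x)%N -> ((x + y).-1 <= (z + x).-1)%N -> (y <= z.+1)%N by move=> *; lia.
  exact: key hg hb'.
apply: (big_ind S) => //.
move=> i _; apply: (SZ); exact: Slow.
Qed.
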